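(* Let $(E,\mathscr{T},\le)$ be a locally compact $T_2$-preordered Tychonoff space with $G(\le)=\bigcap_{f\in\mathcal{F}}G_f$, and let $\mathcal{H}\subseteq\mathcal{F}$ with $G(\le)=\bigcap_{h\in\mathcal{H}}G_h$. Then the $\mathcal{H}$-compactification $c:E\to cE$ is the smallest Hausdorff $T_2$-preorder compactification for which the functions in $\mathcal{H}$ are extendable as continuous isotone functions: it is a Hausdorff $T_2$-preorder compactification for which every $h\circ c^{-1}$, $h\in\mathcal{H}$, extends to a continuous isotone function on $cE$, and every Hausdorff $T_2$-preorder compactification $c':E\to c'E$ for which every $h\circ c'^{-1}$, $h\in\mathcal{H}$, extends to a continuous isotone function $c'E\to[0,1]$ dominates the $\mathcal{H}$-compactification.
   Context: $T_2$-preordered: the graph $G(\le)=\{(x,y):x\le y\}$ is closed in $E\times E$. $\mathcal{F}$ is the family of continuous isotone functions $f:E\to[0,1]$; $G_f=\{(x,y):f(x)\le f(y)\}$. $\mathcal{C}$ is the family of continuous functions $E\to[0,1]$ constant outside a compact set. The $\mathcal{H}$-compactification is $c:E\to[0,1]^{\mathcal{H}\cup\mathcal{C}}$, $c(x)=(g(x))_{g\in\mathcal{H}\cup\mathcal{C}}$, with $cE$ the closure of $c(E)$, the induced product topology, and preorder $x\le_c y$ iff $x_h\le y_h$ for all $h\in\mathcal{H}$. A Hausdorff $T_2$-preorder compactification of $E$ is a preorder embedding (continuous isotone injective, homeomorphism onto image, isotone inverse on image with induced preorder) $c:E\to cE$ with dense image into a compact Hausdorff space with a preorder having closed graph. $c_2$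 dominates $c_1$ if there is a continuous isotone $C:c_2E\to c_1E$ with $C\circ c_2=c_1$. *)

(* Defs.v *)
From HB Require Import structures.
From mathcomp Require Import all_boot all_order all_algebra.
From mathcomp Require Import all_classical all_reals all_analysis.
Import numFieldNormedType.Exports.
Import Order.TTheory GRing.Theory Num.Theory.

Set Implicit Arguments.
Unset Strict Implicit.
Unset Printing Implicit Defensive.

Local Open Scope classical_set_scope.
Local Open Scope ring_scope.

Section Defs.
Variable R : realType.

Definition is_preorder (T : Type) (le : T -> T -> Prop) : Prop :=
  (forall x, le x x) /\ (forall x y z, le x y -> le y z -> le x z).

Definition T2_preordered (T : topologicalType) (le : T -> T -> Prop) : Prop :=
  closed [set p : T * T | le p.1 p.2].

Definition isotone (T : Type) (le : T -> T -> Prop) (f : T -> R) : Prop :=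
  forall x y, le x y -> f x <= f y.

Definition unit_valued (T : Type) (f : T -> R) : Prop :=
  forall x, 0 <= f x <= 1.

Definition Ffam (E : topologicalType) (le : E -> E -> Prop) : set (E -> R) :=
  [set f | [/\ continuous f, isotone le f & unit_valued f]].

(** G(le) = intersection of the G_f, f in a family Fs. *)
Definition graph_determined (E : Type) (le : E -> E -> Prop)
  (Fs : set (E -> R)) : Prop :=
  forall x y, le x y <-> (forall f, Fs f -> f x <= f y).

Definition Cfam (E : topologicalType) : set (E -> R) :=
  [set g | [/\ continuous g, unit_valued g &
     exists K : set E, compact K /\ exists a : R, forall x, ~ K x -> g x = a]].

(** Preorder embedding: continuous, isotone, injective, homeomorphism onto
    its image, with isotone inverse on the image (induced preorder). *)
Definition preorder_embedding (E K : topologicalType)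
  (leE : E -> E -> Prop) (leK : K -> K -> Prop) (c : E -> K) : Prop :=
  [/\ continuous c, injective c,
      (forall U : set E, open U ->
         exists V : set K, open V /\ c @` U = V `&` range c) &
      (forall x y, leE x y <-> leK (c x) (c y))].

Definition T2_preorder_compactification (E K : topologicalType)
  (leE : E -> E -> Prop) (leK : K -> K -> Prop) (c : E -> K) : Prop :=
  [/\ compact [set: K], hausdorff_space K,
      is_preorder leK /\ T2_preordered leK,
      preorder_embedding leE leK c & dense (range c)].

Definition extendable (E K : topologicalType) (leK : K -> K -> Prop)
  (c : E -> K) (h : E -> R) : Prop :=
  exists F : K -> R, [/\ continuous F, isotone leK F, unit_valued F &
                         forall x, F (c x) = h x].

Definition dominates (E K1 K2 : topologicalType)
  (leK1 : K1 -> K1 -> Prop) (leK2 : K2 -> K2 -> Prop)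
  (c2 : E -> K2) (c1 : E -> K1) : Prop :=
  exists C : K2 -> K1, [/\ continuous C,
     (forall p q, leK2 p q -> leK1 (C p) (C q)) &
     forall x, C (c2 x) = c1 x].

Section HComp.
Variables (E : topologicalType) (H : set (E -> R)).

Definition HIdx : Type := {g : E -> R | (H `|` @Cfam E) g}.

Definition Hmap (x : E) : {ptws HIdx -> R} := fun i => sval i x.

Definition HcE_set : set {ptws HIdx -> R} := closure (range Hmap).

Definition HcE : topologicalType :=
  initial_topology (@sval _ (fun p => p \in HcE_set)).

Lemma Hmap_in (x : E) : Hmap x \in HcE_set.
Proof. by rewrite inE; apply: subset_closure; exists x. Qed.

Definition Hc (x : E) : HcE := exist _ (Hmap x) (Hmap_in x).

Definition Hle (p q : HcE) : Prop :=
  forall i : HIdx, H (sval i) -> sval p i <= sval q i.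

End HComp.
End Defs.

(* Main.v *)
Require Import Defs.
From HB Require Import structures.
From mathcomp Require Import all_boot all_order all_algebra.
From mathcomp Require Import all_classical all_reals all_analysis.
Import numFieldNormedType.Exports.
Import Order.TTheory GRing.Theory Num.Theory.
Local Open Scope classical_set_scope.
Local Open Scope ring_scope.
Lemma cont_ptws (R : realType) (Z : topologicalType) (I : Type)
  (f : Z -> {ptws I -> R}) :
  (forall i, continuous (fun z => f z i)) -> continuous f.
Proof.
move=> fc z; apply/cvg_sup => i A /=.
rewrite nbhsE => -[B [[C oC <-] Cfz] BA].
rewrite nbhs_simpl /=.
have : nbhs z ((fun z => f z i) @^-1` C) by apply: fc; apply: open_nbhs_nbhs.
by rewrite nbhsE => -[D [oD Dz] DC]; exists D => // w /DC; exact: BA.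
Qed.
Lemma proj_cont (R : realType) (I : Type) (i : I) :
  continuous (fun f : {ptws I -> R} => f i).
Proof.
move=> f; have /cvg_sup/(_ i) h : (nbhs f) --> f by exact: cvg_id.
move=> A; rewrite nbhsE => -[C [oC Cf] CA]; apply: h.
rewrite nbhsE; exists ((fun g => g i) @^-1` C); last by move=> g /CA.
by split => //; exists C.
Qed.

Section Main.
Variables (R : realType) (E : topologicalType) (H : set (E -> R)).
Hypothesis HF : forall h, H h -> continuous h /\ unit_valued h.
Local Notation I := (HIdx H).
Local Notation X := {ptws HIdx H -> R}.
Local Notation Y := (HcE H).
Local Notation S := (@HcE_set R E H).

Lemma idx_prop (i : I) : continuous (sval i) /\ unit_valued (sval i).
Proof. by case: i => g [/HF//|[]]. Qed.

Lemma val_cont : continuous (fun p : Y => sval p).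
Proof. exact: initial_continuous. Qed.

Lemma coord_cont i : continuous (fun p : Y => sval p i).
Proof. by move=> p; apply: (@continuous_comp _ _ _ (fun p : Y => sval p) (fun f : X => f i)); [exact: val_cont| exact: proj_cont]. Qed.

Lemma Hmap_cont : continuous (@Hmap R E H).
Proof. by apply: cont_ptws => i; case: (idx_prop i). Qed.

Lemma Hc_cont : continuous (@Hc R E H).
Proof. by apply: continuous_comp_initial; exact: Hmap_cont. Qed.

Definition box : set X := [set f | forall i, `[0, 1]%classic (f i)].

Lemma box_closed : closed box.
Proof.
have -> : box = \bigcap_(i in setT) ((fun f : X => f i) @^-1` `[0, 1]%classic).
  by rewrite eqEsubset; split => f Hf i; [move=> _; exact: Hf| exact: Hf].
apply: closed_bigI => i _; apply: preimage_closed; last exact: itv_closed.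
by move=> f _; exact: proj_cont.
Qed.

Lemma S_box : S `<=` box.
Proof.
have hb : box = closure box by apply/closure_id; exact: box_closed.
move=> p Sp; rewrite hb; move: p Sp; apply: closureS => _ [x _ <-] i /=; rewrite /Hmap.
by case: (idx_prop i) => _ /(_ x); rewrite in_itv.
Qed.

HB.instance Definition _ := gen_eqMixin I.

Lemma box_compact : compact box.
Proof.
have := @tychonoff I (fun _ => R) (fun _ => `[0, 1]%classic) (fun _ => @segment_compact R 0 1).
exact.
Qed.

Lemma S_compact : compact S.
Proof.
apply: subclosed_compact; [exact: closed_closure| exact: box_compact| exact: S_box].
Qed.


Lemma Y_compact : compact [set: Y].
Proof.
move=> F FF _.
pose G := (fun p : Y => sval p) @ F.
have GS : G S.
  suff : F [set p : Y | S (sval p)] by [].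
  apply: filterS (filterT (F := F)) => p _ /=; exact: set_mem (proj2_sig p).
have [q [Sq cq]] := @S_compact G (fmap_proper_filter (fun p : Y => sval p) FF) GS.
exists (exist _ q (mem_set Sq)); split => //.
move=> A B FA; rewrite nbhsE => -[B' [[W oW <-] Wp] B'B].
have GA : G ((fun p : Y => sval p) @` A).
  suff : F ((fun p : Y => sval p) @^-1` ((fun p : Y => sval p) @` A)) by [].
  by apply: filterS FA; exact: preimage_image.
have nW : nbhs q W by apply: open_nbhs_nbhs.
have [_ [[a Aa <-] Wa]] := cq _ _ GA nW.
by exists a; split => //; apply: B'B.
Qed.

Lemma X_hausdorff : hausdorff_space X.
Proof. exact: (@hausdorff_product I (fun _ => R) (fun _ => @Rhausdorff R)). Qed.

Lemma Y_hausdorff : hausdorff_space Y.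
Proof.
move=> p q cpq.
have e : sval p = sval q.
  apply: X_hausdorff => A B nA nB.
  have h1 : nbhs p ((fun p : Y => sval p) @^-1` A) by apply: val_cont.
  have h2 : nbhs q ((fun p : Y => sval p) @^-1` B) by apply: val_cont.
  by have [r [Ar Br]] := cpq _ _ h1 h2; exists (sval r).
move: p q e {cpq} => [p hp] [q hq] /= e; subst q.
by congr exist; exact: Prop_irrelevance.
Qed.

Lemma fst_cont (A B : topologicalType) : continuous (@fst A B).
Proof. by move=> [a b]; exact: cvg_fst. Qed.

Lemma snd_cont (A B : topologicalType) : continuous (@snd A B).
Proof. by move=> [a b]; exact: cvg_snd. Qed.

Lemma Hle_closed : T2_preordered (@Hle R E H).
Proof.
rewrite /T2_preordered.
have -> : [set pq : Y * Y | Hle pq.1 pq.2] =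
   \bigcap_(i in [set i : I | H (sval i)])
     ((fun pq : Y * Y => sval pq.1 i - sval pq.2 i) @^-1` [set x | x <= 0]).
  rewrite eqEsubset; split => pq Hpq i Hi /=; last by rewrite -subr_le0; exact: Hpq.
  by rewrite subr_le0; exact: Hpq.
apply: closed_bigI => i _; apply: preimage_closed; last exact: closed_le.
move=> pq _; apply: continuousB.
  by apply: (@continuous_comp _ _ _ (@fst Y Y) (fun p : Y => sval p i)); [exact: fst_cont|exact: coord_cont].
by apply: (@continuous_comp _ _ _ (@snd Y Y) (fun p : Y => sval p i)); [exact: snd_cont|exact: coord_cont].
Qed.

Lemma Hle_preorder : is_preorder (@Hle R E H).
Proof.
split; first by move=> p i _.
by move=> p q r pq qr i Hi; apply: le_trans (pq i Hi) (qr i Hi).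
Qed.


Section WithE.
Hypothesis lcE : locally_compact [set: E].
Hypothesis crE : completely_regular_space E.
Hypothesis hE : hausdorff_space E.

Lemma bump (x : E) (U : set E) : open U -> U x ->
  exists g, [/\ @Cfam R E g, g x = 0 & forall z, g z < 1 -> U z].
Proof.
move=> oU Ux.
have [K nK [cK clK]] := lcE x Logic.I.
rewrite withinET in nK.
pose B := ~` interior (U `&` K).
have clB : closed B by rewrite /B closedC; exact: open_interior.
have nBx : ~ B x.
  rewrite /B => /(_ _); apply; rewrite /interior.
  by apply: filterI => //; apply: open_nbhs_nbhs.
have us : uniform_separator [set x] B := crE x B clB nBx.
exists (Urysohn [set x] B); split.
- split; first exact: Urysohn_continuous.
  + move=> z; have := @Urysohn_range E R [set x] B (Urysohn [set x] B z).
    move=> h; move: (h (ex_intro2 _ _ z Logic.I erefl)).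
    by rewrite /= in_itv.
  + exists K; split => //; exists 1 => z Kz.
    have Bz : B z by move=> /interior_subset [].
    exact: (@Urysohn_sub1 E R _ _ us _ (ex_intro2 _ _ z Bz erefl)).
- exact: (@Urysohn_sub0 E R _ _ us _ (ex_intro2 _ _ x (erefl x) erefl)).
- move=> z gz; apply: contrapT => Uz.
  have : @Urysohn E R [set x] B z = 1.
    have Bz : B z by move=> /interior_subset [].
    exact: (@Urysohn_sub1 E R _ _ us _ (ex_intro2 _ _ z Bz erefl)).
  by move=> e; rewrite e ltxx in gz.
Qed.


Lemma Hc_inj : injective (@Hc R E H).
Proof.
move=> x y exy; have [//|nxy] := eqVneq x y.
have [A [oA xA yA]] := hausdorff_accessible hE nxy.
have [g [Cg gx gU]] := bump x A oA (set_mem xA).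
pose i : I := exist _ g (or_intror Cg).
have : sval (@Hc R E H x) i = sval (@Hc R E H y) i by rewrite exy.
rewrite /= /Hmap /= gx => gy.
by move: yA; rewrite inE /= => /(_ (gU y _)); rewrite -gy ltr01 => /(_ erefl).
Qed.

Lemma Hc_open (U : set E) : open U ->
  exists V : set Y, open V /\ @Hc R E H @` U = V `&` range (@Hc R E H).
Proof.
move=> oU.
exists (\bigcup_(i in [set i : I | forall z, sval i z < 1 -> U z])
          [set p : Y | sval p i < 1]); split.
  apply: bigcup_open => i _.
  have := coord_cont i; rewrite continuousP => /(_ _ (@open_lt R 1)); exact.
rewrite eqEsubset; split.
  move=> _ [x Ux <-]; split; last by exists x.
  have [g [Cg gx gU]] := bump x U oU Ux.
  exists (exist _ g (or_intror Cg)) => //=.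
  by rewrite /Hmap /= gx ltr01.
move=> p [[i Di lt1] [x _ ex]]; exists x => //.
by apply: Di; rewrite -ex in lt1.
Qed.

Lemma Hc_le (le : E -> E -> Prop) : graph_determined le H ->
  forall x y, le x y <-> @Hle R E H (@Hc R E H x) (@Hc R E H y).
Proof.
move=> gd x y; rewrite gd; split.
  by move=> h i Hi; exact: h.
move=> h f Hf; exact: (h (exist _ f (or_introl Hf)) Hf).
Qed.

Lemma Hc_dense : dense (range (@Hc R E H)).
Proof.
move=> O [p Op] [W oW eW].
have Sp : S (sval p) := set_mem (proj2_sig p).
have nW : nbhs (sval p) W by apply: open_nbhs_nbhs; split => //; rewrite -eW in Op.
have [_ [[x _ <-] Wx]] := Sp W nW.
exists (@Hc R E H x); split; last by exists x.
by rewrite -eW.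
Qed.


Lemma Hext h (Hh : H h) : extendable (@Hle R E H) (@Hc R E H) h.
Proof.
exists (fun p : Y => sval p (exist _ h (or_introl Hh))); split.
- exact: coord_cont.
- by move=> p q pq; exact: (pq (exist _ h (or_introl Hh)) Hh).
- move=> p; have := S_box (sval p) (set_mem (proj2_sig p)) (exist _ h (or_introl Hh)).
  by rewrite /= in_itv.
- by [].
Qed.

Section Dom.
Variables (K : topologicalType) (leK : K -> K -> Prop) (c' : E -> K).
Hypothesis hK : hausdorff_space K.
Hypothesis c'cont : continuous c'.
Hypothesis c'inj : injective c'.
Hypothesis c'open : forall U : set E, open U ->
         exists V : set K, open V /\ c' @` U = V `&` range c'.
Hypothesis c'dense : dense (range c').

Lemma range_open (x : E) : exists V : set K, [/\ open V, V (c' x) & V `<=` range c'].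
Proof.
have [N nN [cN clN]] := lcE x Logic.I.
rewrite withinET in nN.
move: nN; rewrite nbhsE => -[U0 [oU0 U0x] U0N].
have [V [oV eV]] := c'open U0 oU0.
have Vx : V (c' x).
  have : (c' @` U0) (c' x) by exists x.
  by rewrite eV => -[].
have cNc : compact (c' @` N).
  by apply: continuous_compact => //; exact: continuous_subspaceT.
have clNc : closed (c' @` N) := compact_closed hK cNc.
exists V; split => // v Vv.
suff : (c' @` N) v by move=> [z _ <-]; exists z.
apply: clNc => B; rewrite nbhsE => -[B0 [oB0 B0v] B0B].
have [w [[B0w Vw] [z _ ezw]]] : (B0 `&` V) `&` range c' !=set0.
  by apply: c'dense; [exists v | exact: openI].
subst w.
have : (c' @` U0) (c' z) by rewrite eV.
move=> [u U0u ezu]; exists (c' z); split; last exact: B0B.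
by exists u => //; exact: U0N.
Qed.

Lemma Cext (g : E -> R) : @Cfam R E g ->
  exists G : K -> R, continuous G /\ forall x, G (c' x) = g x.
Proof.
move=> [cg _ [K0 [cK0 [a ga]]]].
pose G k := if pselect (exists x, c' x = k) is left e then g (projT1 (cid e)) else a.
have Gc x : G (c' x) = g x.
  rewrite /G; case: pselect => [e|]; last by case; exists x.
  by case: cid => z /= /c'inj ->.
have cK0c : compact (c' @` K0).
  by apply: continuous_compact => //; exact: continuous_subspaceT.
have clK0c : closed (c' @` K0) := compact_closed hK cK0c.
have Ga k : ~ (c' @` K0) k -> G k = a.
  move=> nk; rewrite /G; case: pselect => // e.
  case: cid => z /= ez; apply: ga => K0z; apply: nk; by exists z.
exists G; split => // k.
case: (pselect ((c' @` K0) k)) => [[x _ <-]|nk].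
  move=> A; rewrite Gc => nA.
  have : nbhs x (g @^-1` A) by apply: cg.
  rewrite nbhsE => -[U [oU Ux] UA].
  have [V [oV eV]] := c'open U oU.
  have [V' [oV' V'x V'r]] := range_open x.
  have Vx : V (c' x).
    have : (c' @` U) (c' x) by exists x.
    by rewrite eV => -[].
  rewrite nbhsE; exists (V `&` V'); first by split; [exact: openI|].
  move=> w [Vw /V'r [z _ ezw]]; subst w.
  have : (c' @` U) (c' z) by rewrite eV; split => //; exists z.
  move=> [u Uu /c'inj <-]; rewrite /= Gc; exact: UA.
move=> A; rewrite Ga // => nA.
rewrite nbhsE; exists (~` (c' @` K0)); first by split => //; rewrite openC.
by move=> k' nk'; rewrite /= Ga //; exact: nbhs_singleton.
Qed.


Hypothesis ext : forall h, H h -> extendable leK c' h.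

Lemma exG (i : I) : exists G : K -> R,
  [/\ continuous G, forall x, G (c' x) = sval i x & H (sval i) -> isotone leK G].
Proof.
case: (pselect (H (sval i))) => Hi.
  have [F [cF iF _ eF]] := ext _ Hi; by exists F.
have Ci : @Cfam R E (sval i) by case: (proj2_sig i).
by have [G [cG eG]] := Cext _ Ci; exists G.
Qed.

Definition Gf (i : I) : K -> R := projT1 (cid (exG i)).

Lemma Gf_prop (i : I) :
  [/\ continuous (Gf i), forall x, Gf i (c' x) = sval i x & H (sval i) -> isotone leK (Gf i)].
Proof. exact: (projT2 (cid (exG i))). Qed.

Definition Cmap (k : K) : X := fun i => Gf i k.

Lemma Cmap_cont : continuous Cmap.
Proof. by apply: cont_ptws => i; case: (Gf_prop i). Qed.

Lemma Cmap_c x : Cmap (c' x) = @Hmap R E H x.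
Proof.
apply: functional_extensionality_dep => i.
by rewrite /Cmap; case: (Gf_prop i) => _ -> _.
Qed.

Lemma Cmap_S k : S (Cmap k).
Proof.
move=> B nB.
have : nbhs k (Cmap @^-1` B) by apply: Cmap_cont.
rewrite nbhsE => -[B0 [oB0 B0k] B0B].
have [w [B0w [x _ exw]]] := c'dense B0 (ex_intro _ k B0k) oB0.
subst w; exists (@Hmap R E H x); split; first by exists x.
by rewrite -Cmap_c; exact: B0B.
Qed.

Definition Cf (k : K) : Y := exist _ (Cmap k) (mem_set (Cmap_S k)).

Lemma dom : dominates (@Hle R E H) leK c' (@Hc R E H).
Proof.
exists Cf; split.
- by apply: continuous_comp_initial; exact: Cmap_cont.
- move=> p q pq i Hi; rewrite /Cf /= /Cmap.
  by case: (Gf_prop i) => _ _ /(_ Hi); apply.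
- move=> x; rewrite /Cf /Hc; apply: eq_exist; exact: Cmap_c.
Qed.

End Dom.

End WithE.
End Main.

Theorem mainTheorem16 (R : realType) (E : topologicalType)
  (le : E -> E -> Prop) (H : set (E -> R)) :
  locally_compact [set: E] ->
  completely_regular_space E -> hausdorff_space E ->
  is_preorder le -> T2_preordered le ->
  graph_determined le (@Ffam R E le) ->
  H `<=` @Ffam R E le ->
  graph_determined le H ->
  [/\ T2_preorder_compactification le (@Hle R E H) (@Hc R E H),
      (forall h, H h -> extendable (@Hle R E H) (@Hc R E H) h) &
      (forall (K : topologicalType) (leK : K -> K -> Prop) (c' : E -> K),
         T2_preorder_compactification le leK c' ->
         (forall h, H h -> extendable leK c' h) ->
         dominates (@Hle R E H) leK c' (@Hc R E H))].
Proof.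
move=> lcE crE hE preo T2 gdF HsubF gdH.
have HF : forall h, H h -> continuous h /\ unit_valued h.
  by move=> h /HsubF [? ? ?].
split.
- split.
  + by apply: Y_compact.
  + by apply: Y_hausdorff.
  + by split; [apply: Hle_preorder | apply: Hle_closed].
  + split; first by apply: Hc_cont.
    * by apply: Hc_inj.
    * by move=> U oU; apply: Hc_open.
    * by apply: Hc_le.
  + by apply: Hc_dense.
- by move=> h Hh; apply: Hext.
- move=> K leK c' [_ hK _ [cc ci co _] cd] ext.
  by apply: dom.
Qed.
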